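(* For every $n>1$ the complete graph $K_n$ admits no extended irregular dominating set, and for all positive integers $m,n$ the complete bipartite graph $K_{m,n}$ admits no extended irregular dominating set.
   Context: Let $\Gamma=(V,E)$ be a finite simple undirected graph with graph distance $d$. A vertex $v$ carrying a non-negative integer label $\ell$ dominates (covers) exactly the vertices $u$ with $d(u,v)=\ell$; a vertex labeled $0$ dominates only itself. An extended irregular dominating set is a set $S\subseteq V$ together with a labeling $\lambda:S\to\mathbb{Z}_{\ge 0}$ with distinct labels on distinct vertices, such that every vertex of $V$ is dominated by at least one vertex of $S$; it is assumed that some vertex of $S$ has label $0$. *)

(* Defs.v *)
From mathcomp Require Import all_boot.
Set Implicit Arguments. Unset Strict Implicit. Unset Printing Implicit Defensive.

(* A finite simple graph is a symmetric irreflexive relation [e] on a finType. *)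

Definition walk (T : finType) (e : rel T) (u v : T) (k : nat) : Prop :=
  exists p : seq T, [/\ path e u p, last u p = v & size p = k].

Definition gdist_is (T : finType) (e : rel T) (u v : T) (l : nat) : Prop :=
  walk e u v l /\ forall k, k < l -> ~ walk e u v k.

(* Extended irregular dominating set: S with labeling lam (only values on S
   matter), distinct labels on S, some vertex of S labeled 0, and every
   vertex u is dominated by some v in S, i.e. d(u,v) = lam v. *)
Definition ext_irr_dom (T : finType) (e : rel T) (S : {set T}) (lam : T -> nat)
  : Prop :=
  [/\ {in S &, injective lam},
      (exists2 v, v \in S & lam v = 0) &
      forall u : T, exists2 v, v \in S & gdist_is e u v (lam v)].

Definition admits_eids (T : finType) (e : rel T) : Prop :=
  exists (S : {set T}) (lam : T -> nat), ext_irr_dom e S lam.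

Definition complete_rel (n : nat) : rel 'I_n := fun i j => i != j.

Definition cbip_rel (m n : nat) : rel ('I_m + 'I_n)%type :=
  fun x y => match x, y with
             | inl _, inr _ => true
             | inr _, inl _ => true
             | _, _ => false
             end.

Arguments complete_rel n : clear implicits.
Arguments cbip_rel m n : clear implicits.

(* Main.v *)
Require Import Defs.
From mathcomp Require Import all_boot.
Set Implicit Arguments. Unset Strict Implicit. Unset Printing Implicit Defensive.

Lemma walk0 (T : finType) (e : rel T) u v : walk e u v 0 <-> u = v.
Proof.
split; first by case=> [[|x p]] [] //= _ ->.
by move=> ->; exists [::].
Qed.

Lemma walk1 (T : finType) (e : rel T) u v : walk e u v 1 <-> e u v.
Proof.
split; first by case=> [[|x [|y p]]] [] //= /andP[H _] <-.
by move=> H; exists [:: v]; rewrite /= H.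
Qed.

Lemma walk2 (T : finType) (e : rel T) u w v : e u w -> e w v -> walk e u v 2.
Proof. by move=> H1 H2; exists [:: w; v]; rewrite /= H1 H2. Qed.

Lemma gd_le (T : finType) (e : rel T) u v l k :
  gdist_is e u v l -> walk e u v k -> l <= k.
Proof. by case=> _ H W; rewrite leqNgt; apply/negP => /H. Qed.

Lemma gd_walk (T : finType) (e : rel T) u v l : gdist_is e u v l -> walk e u v l.
Proof. by case. Qed.

Lemma gd_self (T : finType) (e : rel T) u v l : gdist_is e u v l -> (l == 0) = (u == v).
Proof.
move=> G; apply/eqP/eqP.
  by move=> E; subst l; apply/walk0; exact: gd_walk G.
move=> E; subst v; have := gd_le G (proj2 (walk0 e u u) erefl).
by rewrite leqn0 => /eqP.
Qed.

Lemma Kn_dist n (u v : 'I_n) l : gdist_is (complete_rel n) u v l -> u != v -> l = 1.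
Proof.
move=> G Huv.
have H1 : l <= 1 by apply: (gd_le G); apply/walk1.
have H0 : l != 0 by rewrite (gd_self G).
by case: l H1 H0 {G} => [|[|]].
Qed.

Definition side m n (x : ('I_m + 'I_n)%type) : bool := if x is inl _ then true else false.

Lemma cb_dist m n (u v : ('I_m + 'I_n)%type) l : 0 < m -> 0 < n ->
  gdist_is (cbip_rel m n) u v l -> u != v ->
  (l = 1 /\ side u != side v) \/ (l = 2 /\ side u = side v).
Proof.
move=> hm hn G Huv.
have H0 : l != 0 by rewrite (gd_self G).
case E: (side u == side v).
  right; split; last by apply/eqP.
  have H2 : l <= 2.
    apply: (gd_le G).
    case: u v E {G Huv} => [a|a] [b|b] //= _.
      by apply: (@walk2 _ _ _ (inr (Ordinal hn))).
    by apply: (@walk2 _ _ _ (inl (Ordinal hm))).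
  have H1 : l != 1.
    apply/eqP => E1; subst l; move: (gd_walk G) => /walk1.
    by case: u v E {G Huv} => [a|a] [b|b].
  by case: l H0 H1 H2 {G} => [|[|[|]]].
left; split; last by apply/negbT.
have H1 : l <= 1.
  apply: (gd_le G); apply/walk1.
  by case: u v E {G Huv} => [a|a] [b|b].
by case: l H1 H0 {G} => [|[|]].
Qed.

Theorem corollary2p3 :
  (forall n : nat, 1 < n -> ~ admits_eids (complete_rel n)) /\
  (forall m n : nat, 0 < m -> 0 < n -> ~ admits_eids (cbip_rel m n)).
Proof.
split.
  move=> n hn [S [lam [inj [z zS z0] dom]]].
  have [u uz] : exists u : 'I_n, u != z.
    case: (z =P Ordinal hn) => E.
      by exists (Ordinal (ltnW hn)); rewrite E -val_eqE.
    by exists (Ordinal hn); apply/eqP => E'; apply: E.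
  have [v vS G] := dom u.
  have vu : u != v.
    apply/negP => /eqP E; subst v.
    move: (G) => /gd_self; rewrite eqxx => /eqP l0.
    by move/eqP: uz; apply; apply: inj => //; rewrite l0 z0.
  have lv1 := Kn_dist G vu.
  have [w wS G'] := dom v.
  case: (eqVneq v w) => [E|vw].
    subst w; move: (G') => /gd_self; rewrite eqxx => /eqP.
    by rewrite lv1.
  have lw1 := Kn_dist G' vw.
  by move/eqP: vw; apply; apply: inj => //; rewrite lv1 lw1.
move=> m n hm hn [S [lam [inj [z zS z0] dom]]].
have key : forall x, x \in S -> lam x != 0 -> exists2 y, y \in S &
    (lam y = 1 /\ side x != side y) \/ (lam y = 2 /\ side x = side y /\ x != y).
  move=> x xS nz; have [y yS G] := dom x.
  have xy : x != y.
    apply/negP => /eqP E; subst y.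
    by move: (G) => /gd_self; rewrite eqxx (negbTE nz).
  exists y => //.
  by case: (cb_dist hm hn G xy) => [[-> ?]|[-> ?]]; [left|right].
have [u uz] : exists u : ('I_m + 'I_n)%type, side u != side z.
  case: (z) => a.
    by exists (inr (Ordinal hn)).
  by exists (inl (Ordinal hm)).
have [v vS Gv] := dom u.
have uv : u != v.
  apply/negP => /eqP E; subst v.
  move: (Gv) => /gd_self; rewrite eqxx => /eqP l0.
  by move/eqP: uz; apply; congr side; apply: inj => //; rewrite l0 z0.
have one_two : forall x, x \in S -> lam x = 1 -> forall w, w \in S -> lam w = 2 -> False.
  move=> x xS x1 w wS w2.
  have [y yS [[y1 nxy]|[y2 [sxy _]]]] := key x xS ltac:(by rewrite x1).
    have E : x = y by apply: inj => //; rewrite x1 y1.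
    by rewrite -E eqxx in nxy.
  have [y' y'S [[y'1 swy]|[y'2 [_ wy]]]] := key w wS ltac:(by rewrite w2).
    have yw : y = w by apply: inj => //; rewrite y2 w2.
    have y'x : y' = x by apply: inj => //; rewrite y'1 x1.
    by rewrite -yw y'x sxy eqxx in swy.
  have : w = y' by apply: inj => //; rewrite w2 y'2.
  by move=> E; rewrite E eqxx in wy.
have has1 : forall w, w \in S -> lam w = 2 -> exists2 x, x \in S & lam x = 1.
  move=> w wS w2.
  have [y yS [[y1 _]|[y2 [_ wy]]]] := key w wS ltac:(by rewrite w2); first by exists y.
  have : w = y by apply: inj => //; rewrite w2 y2.
  by move=> E; rewrite E eqxx in wy.
have has2 : forall x, x \in S -> lam x = 1 -> exists2 w, w \in S & lam w = 2.
  move=> x xS x1.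
  have [y yS [[y1 nxy]|[y2 _]]] := key x xS ltac:(by rewrite x1); last by exists y.
  have E : x = y by apply: inj => //; rewrite x1 y1.
  by rewrite -E eqxx in nxy.
case: (cb_dist hm hn Gv uv) => [[l1 _]|[l2 _]].
  have [w wS w2] := has2 v vS l1.
  exact: (one_two v vS l1 w wS w2).
have [x xS x1] := has1 v vS l2.
exact: (one_two x xS x1 v vS l2).
Qed.
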